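(* Let $(A,f)$ be a finite-dimensional quadratic Lie algebra over a field $\mathbb{K}$ of characteristic zero, let $B$ be a finite-dimensional Lie algebra and $\phi\colon B\to \mathrm{Der}_f(A)$ a Lie algebra homomorphism, and let $(A_B,f_B)$ be the double extension of $(A,f)$ by $(B,\phi)$. If $A_B$ is $t$-step nilpotent, then $A$ is $n$-step nilpotent for some $n\leq t$.
   Context: A quadratic Lie algebra $(A,f)$ is a Lie algebra $A$ with a non-degenerate symmetric bilinear form $f$ that is invariant: $f([x,y],z)+f(y,[x,z])=0$ for all $x,y,z$. $\mathrm{Der}_f(A)$ denotes the Lie algebra of derivations $d$ of $A$ with $f(d(x),y)+f(x,d(y))=0$. Let $w\colon A\times A\to B^*$ be $w(a,a')(b)=f(\phi(b)(a),a')$, and $\mathrm{ad}^*$ the coadjoint action, $\mathrm{ad}^*(b)(\beta)(b')=-\beta([b,b'])$. The double extension is the vector space $A_B=B\oplus A\oplus B^*$ with bracket $[b+a+\beta,b'+a'+\beta']=[b,b']_B+\phi(b)(a')-\phi(b')(a)+[a,a']_A+w(a,a')+\mathrm{ad}^*(b)(\beta')-\mathrm{ad}^*(b')(\beta)$ and form $f_B(b+a+\beta,b'+a'+\beta')=\beta(b')+\beta'(b)+f(a,a')$. A Lie algebra $L$ is $t$-step nilpotent if $L^{t+1}=0$ and $L^t\neq 0$, where $L^1=L$, $L^{k+1}=[L,L^k]$. *)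

(* Defs.v *)
From HB Require Import structures.
From mathcomp Require Import all_boot all_order all_algebra.
Set Implicit Arguments. Unset Strict Implicit. Unset Printing Implicit Defensive.
Import GRing.Theory.
Local Open Scope ring_scope.

Section Lie.
Variable K : fieldType.

Definition lie_algebra (V : lmodType K) (br : V -> V -> V) : Prop :=
  [/\ (forall (a : K) x y z, br (a *: x + y) z = a *: br x z + br y z),
      (forall (a : K) x y z, br z (a *: x + y) = a *: br z x + br z y),
      (forall x, br x x = 0) &
      (forall x y z, br x (br y z) + br y (br z x) + br z (br x y) = 0)].

Definition quadratic_lie (V : lmodType K) (br : V -> V -> V) (f : V -> V -> K) : Prop :=
  [/\ lie_algebra br,
      (forall (a : K) x y z, f (a *: x + y) z = a * f x z + f y z),
      (forall x y, f x y = f y x),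
      (forall x, (forall y, f x y = 0) -> x = 0) &
      (forall x y z, f (br x y) z + f y (br x z) = 0)].

Definition derivation_f (V : lmodType K) (br : V -> V -> V) (f : V -> V -> K)
    (d : V -> V) : Prop :=
  [/\ (forall (a : K) x y, d (a *: x + y) = a *: d x + d y),
      (forall x y, d (br x y) = br (d x) y + br x (d y)) &
      (forall x y, f (d x) y + f x (d y) = 0)].

Definition lie_hom_Derf (A B : lmodType K) (brA : A -> A -> A) (f : A -> A -> K)
    (brB : B -> B -> B) (phi : B -> A -> A) : Prop :=
  [/\ (forall b, derivation_f brA f (phi b)),
      (forall (c : K) b b' x, phi (c *: b + b') x = c *: phi b x + phi b' x) &
      (forall b b' x, phi (brB b b') x = phi b (phi b' x) - phi b' (phi b x))].

Inductive brspan (V : lmodType K) (br : V -> V -> V) (S : V -> Prop) : V -> Prop :=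
  | brspan_br x s : S s -> brspan br S (br x s)
  | brspan_0 : brspan br S 0
  | brspan_D u v : brspan br S u -> brspan br S v -> brspan br S (u + v)
  | brspan_Z (a : K) u : brspan br S u -> brspan br S (a *: u).

(* Lower central series: L^1 = L, L^{k+1} = [L, L^k] (L^0 := L by convention). *)
Fixpoint lcs (V : lmodType K) (br : V -> V -> V) (n : nat) : V -> Prop :=
  match n with
  | 0 => fun _ => True
  | k.+1 => if k is 0 then fun _ => True else brspan br (lcs br k)
  end.

(* L is t-step nilpotent: L^{t+1} = 0 and L^t <> 0; the zero algebra is
   (by convention) 0-step nilpotent. *)
Definition step_nilpotent (V : lmodType K) (br : V -> V -> V) (t : nat) : Prop :=
  (forall x, lcs br t.+1 x -> x = 0) /\
  (t = 0%N \/ exists x, lcs br t x /\ x <> 0).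

Variables (A B : vectType K).
Variables (brA : A -> A -> A) (f : A -> A -> K) (brB : B -> B -> B)
          (phi : B -> A -> A).

(* B^* represented as 'Hom(B, K). *)
Definition dualB := 'Hom(B, K^o).

Definition wmap (a a' : A) : dualB := linfun (fun b : B => (f (phi b a) a' : K^o)).

Definition coad (b : B) (beta : dualB) : dualB :=
  linfun (fun b' : B => - beta (brB b b')).

(* The double extension A_B = B (+) A (+) B^* *)
Definition DE := (B * (A * dualB))%type.

Definition de_bracket (x y : DE) : DE :=
  let: (b, (a, beta)) := x in
  let: (b', (a', beta')) := y in
  (brB b b',
   (phi b a' - phi b' a + brA a a',
    wmap a a' + coad b beta' - coad b' beta)).

(* The form f_B (not needed for the statement, recorded for completeness). *)
Definition de_form (x y : DE) : K :=
  let: (b, (a, beta)) := x in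
  let: (b', (a', beta')) := y in
  beta b' + beta' b + f a a'.

End Lie.

(* Main.v *)
Require Import Defs.
From HB Require Import structures.
From mathcomp Require Import all_boot all_order all_algebra.
From Stdlib Require Import Classical.
Local Open Scope ring_scope.
Import GRing.Theory.

Lemma key (K : fieldType) (A B : vectType K)
    (brA : A -> A -> A) (f : A -> A -> K) (brB : B -> B -> B)
    (phi : B -> A -> A) :
  lie_algebra brB -> lie_hom_Derf brA f brB phi ->
  forall k (x : A), lcs brA k x -> exists beta : dualB B,
    lcs (@de_bracket K A B brA f brB phi) k ((0 : B), (x, beta)).
Proof.
move=> [_ _ brB0 _] [_ phiL _].
have phi0 : forall y, phi 0 y = 0.
  move=> y; have := phiL 1 0 0 y; rewrite scale1r addr0.
  move=> E; move: E; rewrite scale1r => E; apply/eqP; rewrite -(subrr (phi 0 y)) {2}E addrK //.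
case=> [|k]; first by move=> x _; exists 0.
elim: k => [|k IH] x; first by exists 0.
move=> /= Hx; elim: Hx => [y s /IH [beta Hb]| |u v _ [b1 H1] _ [b2 H2]|a u _ [b1 H1]].
- exists (wmap f phi y s + coad brB 0 beta - coad brB 0 0).
  have := brspan_br (de_bracket brA f brB phi) ((0 : B), (y, (0 : dualB B))) Hb.
  by rewrite /de_bracket brB0 !phi0 subr0 add0r.
- exists 0. exact: (brspan_0 _ _).
- exists (b1 + b2). have := brspan_D H1 H2. by rewrite /GRing.add /= /add_pair /= addr0.
- exists (a *: b1). have := brspan_Z a H1. by rewrite /GRing.scale /= /scale_pair /= scaler0.
Qed.

Theorem lemma2p5 (K : fieldType) (A B : vectType K)
    (brA : A -> A -> A) (f : A -> A -> K) (brB : B -> B -> B)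
    (phi : B -> A -> A) (t : nat) :
  [pchar K] =i pred0 ->
  quadratic_lie brA f ->
  lie_algebra brB ->
  lie_hom_Derf brA f brB phi ->
  step_nilpotent (@de_bracket K A B brA f brB phi) t ->
  exists2 n : nat, (n <= t)%N & step_nilpotent brA n.
Proof.
move=> _ _ HB Hphi [Ht _].
have Z : forall x, lcs brA t.+1 x -> x = 0.
  move=> x /(@key _ _ _ brA f brB phi HB Hphi) [beta] /Ht; by case.
elim: t Z {Ht} => [|m IH] Z.
  by exists 0%N => //; split => //; left.
case: (classic (forall x, lcs brA m.+1 x -> x = 0)) => H.
  by have [n Hn Hs] := IH H; exists n => //; apply: leqW.
exists m.+1 => //; split => //; right.
have [x Hx] := not_all_ex_not _ _ H.
exists x; split.
  by apply: NNPP => Hc; apply: Hx => Hc'; case: (Hc Hc').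
by move=> Hc; apply: Hx => _.
Qed.
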